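(* Let $\mathcal H$ be a separable Hilbert space and let $\Phi:B(\mathcal H)\to B(\mathcal H)$ be a quantum channel with Kraus representation $\Phi(A)=\sum_{k\ge1}V_k^*AV_k$, $V_k\in B(\mathcal H)$, $\sum_kV_k^*V_k=I$. Then the multiplicative domain of $\Phi$ satisfies \[ \mathcal M(\Phi)=\{V_jV_k^*:\ j,k=1,2,\dots\}'. \]
   Context: A quantum channel is a unital normal completely positive map $\Phi:B(\mathcal H)\to B(\mathcal H)$. The multiplicative domain is $\mathcal M(\Phi)=\{A\in B(\mathcal H): \Phi(A^*A)=\Phi(A)^*\Phi(A),\ \Phi(AA^* )=\Phi(A)\Phi(A)^*\}$. $'$ denotes the commutant. *)

(* Defs.v *)
From mathcomp Require Import all_boot all_algebra.
From mathcomp Require Import complex.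
From mathcomp Require Import all_classical all_reals.
Set Implicit Arguments. Unset Strict Implicit. Unset Printing Implicit Defensive.
Import GRing.Theory Num.Theory.
Local Open Scope ring_scope.

Record preHilbert (R : realType) := PreHilbert {
  hsort :> lmodType R[i];
  ip : hsort -> hsort -> R[i];
  ip_linear : forall (x : hsort) (a : R[i]) (y z : hsort),
      ip x (a *: y + z) = a * ip x y + ip x z;
  ip_conj : forall x y : hsort, ip y x = (ip x y)^*;
  ip_ge0 : forall x : hsort, 0 <= ip x x;
  ip_eq0 : forall x : hsort, ip x x = 0 -> x = 0
}.

Section Hilbert.
Variables (R : realType) (H : preHilbert R).

Definition hnorm (x : H) : R := Num.sqrt (complex.Re (ip x x)).

Definition hconv (u : nat -> H) (x : H) : Prop :=
  forall e : R, 0 < e -> exists N : nat, forall n : nat, (N <= n)%N -> hnorm (u n - x) < e.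

Definition hcauchy (u : nat -> H) : Prop :=
  forall e : R, 0 < e -> exists N : nat, forall m n : nat,
      (N <= m)%N -> (N <= n)%N -> hnorm (u m - u n) < e.

Definition hcomplete : Prop := forall u : nat -> H, hcauchy u -> exists x, hconv u x.

Definition hseparable : Prop :=
  exists d : nat -> H, forall (x : H) (e : R), 0 < e -> exists n, hnorm (x - d n) < e.

Definition bounded_op (A : H -> H) : Prop :=
  (forall (a : R[i]) (x y : H), A (a *: x + y) = a *: A x + A y) /\
  exists M : R, forall x : H, hnorm (A x) <= M * hnorm x.

Definition is_adjoint (A B : H -> H) : Prop := forall x y : H, ip (A x) y = ip x (B y).

(* the adjoint A^* (exists and is unique for bounded A on a Hilbert space) *)
Definition adj (A : H -> H) : H -> H :=
  match boolp.pselect (exists B, is_adjoint A B) with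
  | left h => proj1_sig (boolp.cid h)
  | right _ => A
  end.

(* Phi(A) = sum_k V_k^* A V_k, with the series converging strongly, where the
   Kraus operators V_k are bounded and sum_k V_k^* V_k = I (strongly). *)
Definition kraus_rep (V : nat -> H -> H) (Phi : (H -> H) -> (H -> H)) : Prop :=
  [/\ forall k, bounded_op (V k),
      forall x : H, hconv (fun n => \sum_(k < n) adj (V k) (V k x)) x &
      forall A, bounded_op A -> forall x : H,
          hconv (fun n => \sum_(k < n) adj (V k) (A (V k x))) (Phi A x)].

Definition mult_domain (Phi : (H -> H) -> (H -> H)) (A : H -> H) : Prop :=
  bounded_op A /\
  Phi (adj A \o A) = adj (Phi A) \o Phi A /\
  Phi (A \o adj A) = Phi A \o adj (Phi A).

Definition commutant (S : (H -> H) -> Prop) (A : H -> H) : Prop :=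
  bounded_op A /\ forall T, S T -> A \o T = T \o A.

End Hilbert.

(* Main.v *)
Require Import Defs.
From mathcomp Require Import all_boot all_algebra.
From mathcomp Require Import complex.
From mathcomp Require Import all_classical all_reals.
From mathcomp Require Import ring lra.
Import GRing.Theory Num.Theory order.Order.TTheory.
Local Open Scope ring_scope.

Section Basics.
Variables (R : realType) (H : preHilbert R).
Implicit Types (x y z w : H) (a b c : R[i]).

Lemma ipD x y z : ip x (y + z) = ip x y + ip x z.
Proof. by have := ip_linear x 1 y z; rewrite scale1r mul1r. Qed.

Lemma ip0 x : ip x 0 = 0.
Proof.
have h := ipD x 0 0; rewrite addr0 in h.
by apply: (addrI (ip x 0)); rewrite -h addr0.
Qed.

Lemma ipZ x a y : ip x (a *: y) = a * ip x y.
Proof. by have := ip_linear x a y 0; rewrite addr0 ip0 addr0. Qed.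

Lemma ipN x y : ip x (- y) = - ip x y.
Proof. by rewrite -scaleN1r ipZ mulN1r. Qed.

Lemma ipB x y z : ip x (y - z) = ip x y - ip x z.
Proof. by rewrite ipD ipN. Qed.

Lemma ip_sum x n (F : 'I_n -> H) : ip x (\sum_(k < n) F k) = \sum_(k < n) ip x (F k).
Proof. exact: (big_morph _ (ipD x) (ip0 x)). Qed.

Lemma conjE (p q : R) : Num.conj (p +i* q)%C = (p +i* - q)%C.
Proof. by []. Qed.

Lemma conjK a : Num.conj (Num.conj a) = a.
Proof. by case: a => p q; rewrite !conjE opprK. Qed.

Lemma conjD a b : Num.conj (a + b) = Num.conj a + Num.conj b.
Proof. by case: a => p q; case: b => r s; rewrite !conjE; simpc. Qed.

Lemma conjM a b : Num.conj (a * b) = Num.conj a * Num.conj b.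
Proof. case: a => p q; case: b => r s; rewrite !conjE; simpc; apply/eqP; rewrite eq_complex /=; apply/andP; split; apply/eqP; ring. Qed.

Lemma conjN a : Num.conj (- a) = - Num.conj a.
Proof. by case: a => p q; rewrite !conjE; simpc. Qed.

Lemma conj0 : Num.conj (0 : R[i]) = 0.
Proof. by rewrite (conjE 0 0) oppr0. Qed.

Lemma ipDl x y z : ip (x + y) z = ip x z + ip y z.
Proof. by rewrite ip_conj ipD conjD -!ip_conj. Qed.

Lemma ipZl a x y : ip (a *: x) y = Num.conj a * ip x y.
Proof. by rewrite ip_conj ipZ conjM -ip_conj. Qed.

Lemma ip0l y : ip 0 y = 0.
Proof. by rewrite ip_conj ip0 conj0. Qed.

Lemma ipNl x y : ip (- x) y = - ip x y.
Proof. by rewrite ip_conj ipN conjN -ip_conj. Qed.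

Lemma ipBl x y z : ip (x - y) z = ip x z - ip y z.
Proof. by rewrite ipDl ipNl. Qed.

Definition N2 x : R := complex.Re (ip x x).

Lemma Im_ipxx x : complex.Im (ip x x) = 0.
Proof.
have := ip_conj x x; case: (ip x x) => p q /= [] h.
lra.
Qed.

Lemma ipxxE x : ip x x = (N2 x)%:C%C.
Proof. rewrite /N2; move: (Im_ipxx x); by case: (ip x x) => p q /= ->. Qed.

Lemma N2_ge0 x : 0 <= N2 x.
Proof. by have := ip_ge0 x; rewrite ipxxE lecR. Qed.

Lemma N2_eq0 x : N2 x = 0 -> x = 0.
Proof. by move=> h; apply: ip_eq0; rewrite ipxxE h. Qed.

Lemma ipC x y : ip y x = Num.conj (ip x y).
Proof. exact: ip_conj. Qed.

Lemma N2_expand x y a :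
  N2 (x + a *: y) = N2 x + 2 * complex.Re (a * ip x y) + ((complex.Re a)^+2 + (complex.Im a)^+2) * N2 y.
Proof.
rewrite /N2 ipD !ipDl !ipZl !ipZ (ipC x y).
rewrite [ip x x]ipxxE [ip y y]ipxxE -/(N2 x) -/(N2 y).
case: a => a1 a2; case: (ip x y) => p q.
rewrite -!complexr0 !conjE; simpc => /=. ring.
Qed.


Lemma N2_add x y : N2 (x + y) = N2 x + 2 * complex.Re (ip x y) + N2 y.
Proof.
have := N2_expand x y 1; rewrite scale1r mul1r => ->.
rewrite [complex.Re 1]/= [complex.Im 1]/=; ring.
Qed.

Lemma N2_0 : N2 0 = 0.
Proof. by rewrite /N2 ip0. Qed.

Lemma N2_scale a x : N2 (a *: x) = ((complex.Re a)^+2 + (complex.Im a)^+2) * N2 x.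
Proof.
have := N2_expand 0 x a; rewrite add0r => ->.
by rewrite ip0l mulr0 N2_0 /= mulr0 !add0r.
Qed.

Lemma N2_opp x : N2 (- x) = N2 x.
Proof.
rewrite -scaleN1r N2_scale /=. ring.
Qed.

Lemma N2_sub x y : N2 (x - y) = N2 x - 2 * complex.Re (ip x y) + N2 y.
Proof. by rewrite N2_add ipN N2_opp raddfN /=; ring. Qed.

Lemma hnormE x : hnorm x = Num.sqrt (N2 x).
Proof. by []. Qed.

Lemma hnorm_ge0 x : 0 <= hnorm x.
Proof. exact: sqrtr_ge0. Qed.

Lemma hnorm_sqr x : hnorm x ^+ 2 = N2 x.
Proof. by rewrite hnormE sqr_sqrtr // N2_ge0. Qed.

Lemma hnorm_lt x (e : R) : 0 < e -> (hnorm x < e) = (N2 x < e ^+ 2).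
Proof.
move=> he; apply/idP/idP => h.
  have := hnorm_ge0 x; rewrite -hnorm_sqr; nra.
have h0 := hnorm_ge0 x; have h1 := hnorm_sqr x.
rewrite -h1 in h; nra.
Qed.

Lemma hnorm_opp x : hnorm (- x) = hnorm x.
Proof. by rewrite !hnormE N2_opp. Qed.

Lemma hnorm_eq0 x : hnorm x = 0 -> x = 0.
Proof. by move=> h; apply: N2_eq0; rewrite -hnorm_sqr h expr0n. Qed.

Lemma CS2 x y :
  (complex.Re (ip x y))^+2 + (complex.Im (ip x y))^+2 <= N2 x * N2 y.
Proof.
have [hy|hy] := eqVneq (N2 y) 0.
  by rewrite (N2_eq0 _ hy) ip0 N2_0 mulr0 /=; lra.
have Npos : 0 < N2 y by have := N2_ge0 y; move: hy => /eqP hy; lra.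
set N := N2 y.
move: (N2_ge0 (x + ((- complex.Re (ip x y) / N) +i* (complex.Im (ip x y) / N))%C *: y)).
rewrite N2_expand -/N.
case: (ip x y) => p q /=.
move=> h.
have e : N * (N2 x + 2 * (- p / N * p - q / N * q) + ((- p / N) ^+ 2 + (q / N) ^+ 2) * N)
   = N * N2 x - (p ^+ 2 + q ^+ 2).
  by field.
nra.
Qed.

Local Notation normc := Normc.normc.

Lemma normc_sqr a : normc a ^+ 2 = (complex.Re a)^+2 + (complex.Im a)^+2.
Proof. by case: a => p q /=; rewrite sqr_sqrtr // addr_ge0 // sqr_ge0. Qed.

Lemma normc_ge0 a : 0 <= normc a.
Proof. by case: a => p q /=; exact: sqrtr_ge0. Qed.

Lemma CS x y : normc (ip x y) <= hnorm x * hnorm y.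
Proof.
have h := CS2 x y; rewrite -normc_sqr -!hnorm_sqr -exprMn in h.
have := normc_ge0 (ip x y); have := mulr_ge0 (hnorm_ge0 x) (hnorm_ge0 y).
move: h; set a := normc _; set b := _ * _; nra.
Qed.

Lemma Re_le_normc a : complex.Re a <= normc a.
Proof.
have h := normc_sqr a; have := normc_ge0 a; have := sqr_ge0 (complex.Im a); nra.
Qed.

Lemma hnorm_triangle x y : hnorm (x + y) <= hnorm x + hnorm y.
Proof.
have h := N2_add x y; rewrite -!hnorm_sqr in h.
have := Re_le_normc (ip x y); have := CS x y.
have := hnorm_ge0 x; have := hnorm_ge0 y; have := hnorm_ge0 (x + y).
nra.
Qed.


Lemma normcN' a : normc (- a) = normc a.
Proof. by case: a => p q /=; rewrite !sqrrN. Qed.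

Lemma normcB a b : normc (a - b) = normc (b - a).
Proof. by rewrite -normcN' opprB. Qed.

Lemma normc_conj a : normc (Num.conj a) = normc a.
Proof. by case: a => p q; rewrite conjE /= sqrrN. Qed.

Lemma normc_triangle a b : normc (a + b) <= normc a + normc b.
Proof. exact: le_normcD. Qed.

Lemma normc_eq0 a : normc a = 0 -> a = 0.
Proof. exact: Normc.eq0_normc. Qed.

Lemma small_eq0 (r : R) : 0 <= r -> (forall e, 0 < e -> r < e) -> r = 0.
Proof.
move=> r0 h; have [//|rn] := eqVneq r 0.
have rp : 0 < r by rewrite lt0r rn r0.
have := h r rp; lra.
Qed.

Definition cconv (u : nat -> R[i]) (l : R[i]) :=
  forall e : R, 0 < e -> exists N, forall n, (N <= n)%N -> normc (u n - l) < e.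

Lemma cconv_uniq u l1 l2 : cconv u l1 -> cconv u l2 -> l1 = l2.
Proof.
move=> h1 h2; apply/eqP; rewrite -subr_eq0; apply/eqP; apply: normc_eq0.
apply: small_eq0; first exact: normc_ge0.
move=> e he; have he2 : 0 < e / 2 by lra.
have [N1 H1] := h1 _ he2; have [N2' H2] := h2 _ he2.
have := H1 (maxn N1 N2') (leq_maxl _ _); have := H2 (maxn N1 N2') (leq_maxr _ _).
set un := u _ => a b.
have := normc_triangle (l1 - un) (un - l2).
rewrite addrA subrK normcB; lra.
Qed.

Lemma cconv_ext u v l : (forall n, u n = v n) -> cconv u l -> cconv v l.
Proof. by move=> e h eps /h [N HN]; exists N => n /HN; rewrite e. Qed.

Lemma cconv_add u v l m : cconv u l -> cconv v m -> cconv (fun n => u n + v n) (l + m).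
Proof.
move=> h1 h2 e he; have he2 : 0 < e / 2 by lra.
have [N1 H1] := h1 _ he2; have [N2' H2] := h2 _ he2.
exists (maxn N1 N2') => n hn.
have := H1 n (leq_trans (leq_maxl _ _) hn); have := H2 n (leq_trans (leq_maxr _ _) hn).
have -> : u n + v n - (l + m) = (u n - l) + (v n - m) by rewrite opprD addrACA.
have := normc_triangle (u n - l) (v n - m); lra.
Qed.

Lemma cconv_opp u l : cconv u l -> cconv (fun n => - u n) (- l).
Proof. by move=> h e /h [N HN]; exists N => n /HN; rewrite -opprD normcN'. Qed.

Lemma cconv_conj u l : cconv u l -> cconv (fun n => Num.conj (u n)) (Num.conj l).
Proof. by move=> h e /h [N HN]; exists N => n /HN; rewrite -conjN -conjD normc_conj. Qed.

Lemma cconv_cst l : cconv (fun _ => l) l.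
Proof. by move=> e he; exists 0%N => n _; rewrite subrr /= expr0n /= addr0 sqrtr0. Qed.

Lemma hconv_ip u x w : hconv u x -> cconv (fun n => ip w (u n)) (ip w x).
Proof.
move=> h e he.
have hw := hnorm_ge0 w.
have he' : 0 < e / (hnorm w + 1) by apply: divr_gt0 => //; lra.
have [N HN] := h _ he'; exists N => n /HN hn.
rewrite -ipB; apply: (le_lt_trans (CS _ _)).
have hn0 := hnorm_ge0 (u n - x).
have : hnorm w * hnorm (u n - x) <= hnorm w * (e / (hnorm w + 1)).
  by apply: ler_wpM2l => //; apply: ltW.
have : hnorm w * (e / (hnorm w + 1)) < e.
  rewrite mulrA ltr_pdivrMr; last lra. nra.
lra.
Qed.

Lemma hconv_ipl u x w : hconv u x -> cconv (fun n => ip (u n) w) (ip x w).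
Proof.
move=> /(hconv_ip _ _ w) /cconv_conj h.
rewrite (ipC w x); apply: (cconv_ext _ _ _ _ h) => n /=.
by rewrite (ipC w (u n)).
Qed.

Lemma ip_ext x y : (forall w, ip w x = ip w y) -> x = y.
Proof.
move=> h; apply/eqP; rewrite -subr_eq0; apply/eqP; apply: ip_eq0.
by rewrite ipB h subrr.
Qed.

Lemma hconv_uniq u x y : hconv u x -> hconv u y -> x = y.
Proof.
move=> h1 h2; apply: ip_ext => w.
exact: cconv_uniq (hconv_ip _ _ w h1) (hconv_ip _ _ w h2).
Qed.

Lemma hconv_ext u v x : (forall n, u n = v n) -> hconv u x -> hconv v x.
Proof. by move=> e h eps /h [N HN]; exists N => n /HN; rewrite e. Qed.


Definition linop (A : H -> H) := forall a x y, A (a *: x + y) = a *: A x + A y.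

Lemma linD A : linop A -> forall x y, A (x + y) = A x + A y.
Proof. by move=> h x y; rewrite -(scale1r x) h !scale1r. Qed.

Lemma lin0 A : linop A -> A 0 = 0.
Proof.
move=> h; have := linD _ h 0 0; rewrite addr0 => e.
by apply: (addrI (A 0)); rewrite -e addr0.
Qed.

Lemma linZ A : linop A -> forall a x, A (a *: x) = a *: A x.
Proof. by move=> h a x; have := h a x 0; rewrite !addr0 lin0 // addr0. Qed.

Lemma linN A : linop A -> forall x, A (- x) = - A x.
Proof. by move=> h x; rewrite -scaleN1r linZ // scaleN1r. Qed.

Lemma linB A : linop A -> forall x y, A (x - y) = A x - A y.
Proof. by move=> h x y; rewrite linD // linN. Qed.

Lemma lin_sum A : linop A -> forall n (F : 'I_n -> H), A (\sum_(k < n) F k) = \sum_(k < n) A (F k).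
Proof. by move=> h n F; exact: (big_morph _ (linD _ h) (lin0 _ h)). Qed.

Lemma linop_comp A B : linop A -> linop B -> linop (A \o B).
Proof. by move=> hA hB a x y /=; rewrite hB hA. Qed.

Lemma bounded_lin (A : H -> H) : bounded_op A -> linop A.
Proof. by case. Qed.

Lemma bounded_pos A : bounded_op A -> exists M, 0 < M /\ forall x, hnorm (A x) <= M * hnorm x.
Proof.
case=> _ [M HM]; exists (`|M| + 1); split; first by have := normr_ge0 M; lra.
move=> x; apply: (le_trans (HM x)); apply: ler_wpM2r; first exact: hnorm_ge0.
have := ler_norm M; lra.
Qed.

Lemma bounded_comp (A B : H -> H) : bounded_op A -> bounded_op B -> bounded_op (A \o B).
Proof.
move=> hA hB; split; first exact: linop_comp (bounded_lin _ hA) (bounded_lin _ hB).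
have [M [M0 HM]] := bounded_pos _ hA; have [K [K0 HK]] := bounded_pos _ hB.
exists (M * K) => x /=; apply: (le_trans (HM _)).
rewrite -mulrA; apply: ler_wpM2l; [lra | exact: HK].
Qed.

Lemma hconv_lin (A : H -> H) u x : bounded_op A -> hconv u x -> hconv (fun n => A (u n)) (A x).
Proof.
move=> hA h e he; have [M [M0 HM]] := bounded_pos _ hA.
have he' : 0 < e / M by apply: divr_gt0.
have [N HN] := h _ he'; exists N => n /HN hn.
rewrite -linB; last exact: bounded_lin.
apply: (le_lt_trans (HM _)).
by rewrite mulrC -ltr_pdivlMr.
Qed.

Lemma is_adjoint_sym (A B : H -> H) : is_adjoint A B -> is_adjoint B A.
Proof. by move=> h x y; rewrite ipC -h -ipC. Qed.

Lemma adj_eq (A B : H -> H) : is_adjoint A B -> adj A = B.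
Proof.
move=> hB; rewrite /adj; case: boolp.pselect => [h|[]]; last by exists B.
case: (boolp.cid h) => B' hB' /=.
apply: boolp.funext => y; apply: ip_ext => w.
by rewrite -hB -hB'.
Qed.

Lemma adjoint_lin (A B : H -> H) : is_adjoint A B -> linop B.
Proof.
move=> h a x y; apply: ip_ext => w.
by rewrite -h !ipD !ipZ -!h.
Qed.

Lemma adjoint_bounded (A B : H -> H) : bounded_op A -> is_adjoint A B -> bounded_op B.
Proof.
move=> hA h; split; first exact: adjoint_lin h.
have [M [M0 HM]] := bounded_pos _ hA; exists M => y.
have e : N2 (B y) = complex.Re (ip (A (B y)) y) by rewrite h.
have := Re_le_normc (ip (A (B y)) y); have := CS (A (B y)) y.
have := HM (B y); rewrite -hnorm_sqr in e.
have := hnorm_ge0 (B y); have := hnorm_ge0 y; have := hnorm_ge0 (A (B y)).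
move: e; set b := hnorm (B y); set c := hnorm y; set d := hnorm (A _).
set r := complex.Re _; set s := Normc.normc _ => e h1 h2 h3 h4 h5 h6.
have hb : b ^+ 2 <= M * b * c.
  have : d * c <= M * b * c by apply: ler_wpM2r.
  lra.
have hMc : 0 <= M * c by apply: mulr_ge0 => //; lra.
nra.
Qed.

Lemma half_twoC : ((2:R)^-1)%:C%C * (1 + 1) = 1 :> R[i].
Proof. have e : ((1:R) + 1)%:C%C = 1 + 1 :> R[i] by rewrite rmorphD rmorph1.
by rewrite -e -rmorphM mulVf // pnatr_eq0.
Qed.
Lemma inv_small (r : R) : 0 < r -> exists N, forall n, (N <= n)%N -> (n.+1%:R)^-1 < r.
Proof.
move=> r0; exists (Num.Def.archi_bound (r^-1)) => n hn.
have h1 : r^-1 < (Num.Def.archi_bound r^-1)%:R by apply: archi_boundP; rewrite invr_ge0 ltW.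
have h2 : (Num.Def.archi_bound r^-1)%:R <= n.+1%:R :> R by rewrite ler_nat; apply: leqW.
have hn0 : 0 < n.+1%:R :> R by rewrite ltr0Sn.
rewrite -[_^-1]mul1r ltr_pdivrMr //.
have h3 : r * r^-1 = 1 by rewrite mulfV // lt0r_neq0.
nra.
Qed.

Lemma riesz (f : H -> R[i]) :
  (forall a x y, f (a *: x + y) = a * f x + f y) ->
  (exists M, forall x, normc (f x) <= M * hnorm x) ->
  hcomplete H ->
  exists z, forall x, f x = ip z x.
Proof.
move=> hf [M0 HM0] hc.
have fD x y : f (x + y) = f x + f y by have := hf 1 x y; rewrite scale1r mul1r.
have f0 : f 0 = 0.
  have := fD 0 0; rewrite addr0 => e.
  by apply: (addrI (f 0)); rewrite -e addr0.
have fZ a x : f (a *: x) = a * f x by have := hf a x 0; rewrite !addr0 f0 addr0.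
have fN x : f (- x) = - f x by rewrite -scaleN1r fZ mulN1r.
have fB x y : f (x - y) = f x - f y by rewrite fD fN.
pose M := `|M0| + 1.
have M0p : 0 < M by have := normr_ge0 M0; rewrite /M; lra.
have HM x : normc (f x) <= M * hnorm x.
  apply: (le_trans (HM0 x)); apply: ler_wpM2r; first exact: hnorm_ge0.
  have := ler_norm M0; rewrite /M; lra.
case: (boolp.pselect (exists x1, f x1 != 0)) => [[x1 hx1]|hno]; last first.
  exists 0 => x; rewrite ip0l; apply/eqP; apply/negPn/negP => hne.
  by apply: hno; exists x.
pose S : set R := fun r => exists x, f x = 1 /\ r = N2 x.
have S0 : nonempty S.
  exists (N2 ((f x1)^-1 *: x1)); exists ((f x1)^-1 *: x1); split => //.
  by rewrite fZ mulVf.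
have Slb : has_lbound S by exists 0 => r [x [_ ->]]; exact: N2_ge0.
pose d := inf S.
have dlb x : f x = 1 -> d <= N2 x.
  by move=> hx; apply: (ge_inf Slb); exists x.
have d0 : 0 <= d by apply: lb_le_inf S0 _ => r [x [_ ->]]; exact: N2_ge0.
have seqx : forall n : nat, exists x, f x = 1 /\ N2 x < d + (n.+1%:R)^-1.
  move=> n; have hn : 0 < (n.+1%:R : R)^-1 by rewrite invr_gt0 ltr0Sn.
  have [r [x [hx ->]] hr] := inf_adherent hn (conj S0 Slb).
  by exists x.
have [xs hxs] := boolp.choice seqx.
have par (u v : H) : f u = 1 -> f v = 1 -> N2 (u - v) <= 2 * N2 u + 2 * N2 v - 4 * d.
  move=> ha hb.
  have hm : f (((2:R)^-1)%:C%C *: (u + v)) = 1 by rewrite fZ fD ha hb half_twoC.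
  have := dlb _ hm; rewrite N2_scale /= expr0n /= addr0.
  have := N2_add u v; have := N2_sub u v.
  move=> e1 e2 h.
  have e3 : 4 * ((2:R)^-1 ^+ 2) = 1 by field.
  nra.
have cauchy : hcauchy xs.
  move=> e he.
  have he2 : 0 < e ^+ 2 / 4 by apply: divr_gt0 => //; apply: exprn_gt0.
  have [N HN] := inv_small _ he2.
  exists N => m n hm hn.
  rewrite hnorm_lt //.
  have := par _ _ (proj1 (hxs m)) (proj1 (hxs n)).
  have := proj2 (hxs m); have := proj2 (hxs n).
  have := HN _ hm; have := HN _ hn.
  move: (e ^+ 2) (n.+1%:R^-1) (m.+1%:R^-1) => E i1 i2. lra.
have [x0 hx0] := hc _ cauchy.
have fx0 : f x0 = 1.
  apply/eqP; rewrite -subr_eq0; apply/eqP; apply: normc_eq0.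
  apply: small_eq0; first exact: normc_ge0.
  move=> e he; have [N HN] := hx0 (e / M) (divr_gt0 he M0p).
  have := HN N (leqnn N); rewrite -(proj1 (hxs N)) normcB -fB => hN.
  apply: (le_lt_trans (HM _)); by rewrite mulrC -ltr_pdivlMr.
have x0d : N2 x0 <= d.
  rewrite leNgt; apply/negP => hlt.
  pose g := N2 x0 - d; have g0 : 0 < g by rewrite /g; lra.
  have [N1 HN1] := inv_small (g / 2) ltac:(lra).
  have he : 0 < g / (4 * (hnorm x0 + 1)).
    by apply: divr_gt0 => //; have := hnorm_ge0 x0; lra.
  have [N2' HN2] := hx0 _ he.
  pose n := maxn N1 N2'.
  have h1 := HN1 n (leq_maxl _ _); have h2 := HN2 n (leq_maxr _ _).
  have h3 := proj2 (hxs n).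
  have e : xs n = x0 + (1 *: (xs n - x0)) by rewrite scale1r addrC subrK.
  have := N2_expand x0 (xs n - x0) 1; rewrite -e mul1r /= expr0n /= addr0 expr1n mul1r.
  have := Re_le_normc (- ip x0 (xs n - x0)); rewrite normcN' raddfN /=.
  have := CS x0 (xs n - x0).
  have := hnorm_ge0 x0; have := hnorm_ge0 (xs n - x0); have := N2_ge0 (xs n - x0).
  set h0 := hnorm x0; set dl := hnorm _; set r := complex.Re _; set s := Normc.normc _.
  move=> q1 q2 q3 q4 q5 q6.
  have q7 : h0 * dl <= h0 * (g / (4 * (h0 + 1)))  by apply: ler_wpM2l => //; apply: ltW.
  have q8 : h0 * (g / (4 * (h0 + 1))) <= g / 4.
    rewrite mulrA ler_pdivrMr; last lra.
    have : 0 <= g by lra. nra.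
  have eg : g = N2 x0 - d by []. suff : N2 x0 < N2 x0 by rewrite ltxx. move: h1 h3; move: (n.+1%:R^-1) => i1 h1 h3. clearbody g. lra.
have orth y : f y = 0 -> ip x0 y = 0.
  move=> hy.
  pose c := ip x0 y; pose P := (complex.Re c)^+2 + (complex.Im c)^+2.
  have P0 : 0 <= P by apply: addr_ge0; apply: sqr_ge0.
  pose s := (N2 y + 1)^-1.
  have s0 : 0 < s by rewrite invr_gt0; have := N2_ge0 y; lra.
  have s1 : s * N2 y <= 1.
    rewrite /s mulrC ler_pdivrMr; last by have := N2_ge0 y; lra.
    lra.
  pose a := ((- s * complex.Re c) +i* (s * complex.Im c))%C.
  have hfa : f (x0 + a *: y) = 1 by rewrite fD fZ hy mulr0 addr0.
  have := dlb _ hfa; rewrite N2_expand -/c.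
  have eRe : complex.Re (a * c) = - s * P.
    rewrite /a /P; case: (c) => p q /=; ring.
  have eN : (complex.Re a)^+2 + (complex.Im a)^+2 = s ^+ 2 * P.
    rewrite /a /P /=; ring.
  rewrite eRe eN => h.
  have h2 : 0 <= - 2 * s * P + s ^+ 2 * P * N2 y by nra.
  have h3 : s ^+ 2 * P * N2 y <= s * P.
    have : s * P * (s * N2 y) <= s * P * 1 by apply: ler_wpM2l => //; apply: mulr_ge0 => //; lra.
    rewrite mulr1 => h4; nra.
  have hP : P = 0.
    have : s * P <= 0 by nra.
    move=> h5; have : P <= 0 by nra.
    lra.
  have hre : complex.Re c = 0.
    have := sqr_ge0 (complex.Im c); have := sqr_ge0 (complex.Re c); move: hP; rewrite /P => hP h6 h7.
    apply/eqP; rewrite -sqrf_eq0; apply/eqP; lra.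
  have him : complex.Im c = 0.
    have := sqr_ge0 (complex.Im c); have := sqr_ge0 (complex.Re c); move: hP; rewrite /P => hP h6 h7.
    apply/eqP; rewrite -sqrf_eq0; apply/eqP; lra.
  rewrite -/c; move: hre him; case: (c) => p q /= -> -> //.
have Nx0 : N2 x0 != 0.
  apply/eqP => h; move: fx0; rewrite (N2_eq0 _ h) f0 => /eqP.
  by rewrite eq_sym oner_eq0.
exists (((N2 x0)^-1)%:C%C *: x0) => x.
have hw : f (x - f x *: x0) = 0 by rewrite fB fZ fx0 mulr1 subrr.
have := orth _ hw; rewrite ipB ipZ ipxxE => /eqP; rewrite subr_eq0 => /eqP hx.
rewrite ipZl hx conjE oppr0 complexr0 mulrA mulrC mulrA -rmorphM mulfV // mul1r //.
Qed.


Lemma adj_exists (A : H -> H) : hcomplete H -> bounded_op A -> is_adjoint A (adj A).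
Proof.
move=> hc hA.
have [M [M0 HM]] := bounded_pos _ hA.
have ex : forall y, exists z, forall x, ip y (A x) = ip z x.
  move=> y; apply: riesz => //.
    by move=> a x x'; rewrite (bounded_lin _ hA) ipD ipZ.
  exists (hnorm y * M) => x; apply: (le_trans (CS _ _)).
  rewrite -mulrA; apply: ler_wpM2l; [exact: hnorm_ge0 | exact: HM].
have [B hB] := boolp.choice ex.
have hAB : is_adjoint A B by move=> x y; rewrite ipC hB -ipC.
by rewrite (adj_eq _ _ hAB).
Qed.

Lemma conj_sum n (F : 'I_n -> R[i]) : Num.conj (\sum_(k < n) F k) = \sum_(k < n) Num.conj (F k).
Proof. exact: (big_morph _ conjD conj0). Qed.

Lemma sum4 n (a b c d : 'I_n -> R[i]) :
  \sum_(k < n) (a k - b k - c k + d k) =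
  \sum_(k < n) a k - \sum_(k < n) b k - \sum_(k < n) c k + \sum_(k < n) d k.
Proof. by rewrite big_split /= !sumrB. Qed.

Lemma sum_ge_term (t : nat -> R) k n : (forall j, 0 <= t j) -> (k < n)%N ->
  t k <= \sum_(j < n) t j.
Proof.
move=> t0; elim: n => [//|n IH] hk.
rewrite big_ord_recr /=.
have [ekn|nkn] := eqVneq k n.
  rewrite ekn; have : 0 <= \sum_(j < n) t j by apply: sumr_ge0 => j _.
  lra.
have hk' : (k < n)%N by rewrite ltn_neqAle nkn /= -ltnS.
have := IH hk'; have := t0 n; lra.
Qed.

Lemma nonneg_series_zero (t : nat -> R) : (forall k, 0 <= t k) ->
  cconv (fun n => \sum_(k < n) (t k)%:C%C) 0 -> forall k, t k = 0.
Proof.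
move=> t0 h k; have [//|tk] := eqVneq (t k) 0.
have tkp : 0 < t k by rewrite lt0r tk t0.
have [N HN] := h _ tkp.
have := HN (maxn N k.+1) (leq_maxl _ _).
rewrite subr0 -rmorph_sum /= expr0n /= addr0 sqrtr_sqr.
have := sum_ge_term t k (maxn N k.+1) t0 (leq_maxr N k.+1).
move: (\sum_(_ < _) _) => s hs.
rewrite ger0_norm; first lra.
have := t0 k; lra.
Qed.

Arguments cconv_uniq [u l1 l2].
Arguments cconv_ext [u v l].
Arguments cconv_add [u v l m].
Arguments cconv_opp [u l].
Arguments cconv_conj [u l].
Arguments hconv_uniq [u x y].
Arguments hconv_ext [u v x].
Arguments hconv_lin [A u x].
Arguments hconv_ip [u x] w.
Arguments is_adjoint_sym [A B].
Arguments adj_eq [A B].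
Arguments adjoint_bounded [A B].
Arguments bounded_comp [A B].
Arguments bounded_lin [A].
Arguments nonneg_series_zero [t].
Arguments N2_eq0 [x].
Arguments bounded_pos [A].
Arguments adj_exists [A].
Arguments linD [A].
Arguments lin_sum [A].

Variables (hc : hcomplete H) (V : nat -> H -> H) (Phi : (H -> H) -> (H -> H)).
Hypothesis HK : kraus_rep V Phi.

Let Vb k : bounded_op (V k).
Proof. by case: HK. Qed.

Let Vadj k : is_adjoint (V k) (adj (V k)).
Proof. exact: adj_exists hc (Vb k). Qed.

Let Vadj' k : is_adjoint (adj (V k)) (V k).
Proof. exact: is_adjoint_sym (Vadj k). Qed.

Let HK2 x : hconv (fun n => \sum_(k < n) adj (V k) (V k x)) x.
Proof. by case: HK. Qed.

Let HK3 (B : H -> H) : bounded_op B -> forall x,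
  hconv (fun n => \sum_(k < n) adj (V k) (B (V k x))) (Phi B x).
Proof. by case: HK => _ _; apply. Qed.

Lemma L_ip (B : H -> H) : bounded_op B -> forall x y,
  cconv (fun n => \sum_(k < n) ip (V k x) (B (V k y))) (ip x (Phi B y)).
Proof.
move=> hB x y; have := hconv_ip x (HK3 _ hB y).
apply: cconv_ext => n. rewrite ip_sum; apply: eq_bigr => k _.
by rewrite Vadj.
Qed.

Lemma L_id x y : cconv (fun n => \sum_(k < n) ip (V k x) (V k y)) (ip x y).
Proof.
have := hconv_ip x (HK2 y).
apply: cconv_ext => n; rewrite ip_sum; apply: eq_bigr => k _.
by rewrite Vadj.
Qed.

Lemma Phi_adj (B B' : H -> H) : bounded_op B -> bounded_op B' -> is_adjoint B B' ->
  is_adjoint (Phi B) (Phi B').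
Proof.
move=> hB hB' hBB' x y.
have h1 := cconv_conj (L_ip _ hB y x).
have h2 := L_ip _ hB' x y.
rewrite ipC; apply: cconv_uniq h1 _.
apply: cconv_ext h2 => n; rewrite conj_sum; apply: eq_bigr => k _.
by rewrite -ipC hBB'.
Qed.

Lemma L1 (B B' : H -> H) : bounded_op B -> bounded_op B' -> is_adjoint B B' ->
  (forall x, Phi (B' \o B) x = Phi B' (Phi B x)) ->
  forall k x, B (V k x) = V k (Phi B x).
Proof.
move=> hB hB' hBB' hPhi k x.
pose u := Phi B x.
pose t j := N2 (B (V j x) - V j u).
have t0 j : 0 <= t j by exact: N2_ge0.
suff : cconv (fun n => \sum_(j < n) (t j)%:C%C) 0.
  move/(nonneg_series_zero t0)/(_ k) => /N2_eq0 /eqP; rewrite subr_eq0 => /eqP //.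
have hPB := Phi_adj _ _ hB hB' hBB'.
have ha := L_ip _ (bounded_comp hB' hB) x x.
rewrite hPhi -hPB -/u in ha.
have hb := cconv_conj (L_ip _ hB u x); rewrite -/u -ipC in hb.
have hc' := L_ip _ hB u x; rewrite -/u in hc'.
have hd := L_id u u.
have := cconv_add (cconv_add (cconv_add ha (cconv_opp hb)) (cconv_opp hc')) hd.
have -> : ip u u - ip u u - ip u u + ip u u = 0 by rewrite subrr sub0r addNr.
move=> h; apply: (cconv_ext _ h) => n.
rewrite conj_sum -sum4; apply: eq_bigr => j _.
rewrite /t -ipxxE ipBl !ipB /= hBB' (ipC (V j u) (B (V j x))).
ring.
Qed.


Lemma comm_step (B : H -> H) : bounded_op B ->
  (forall j k y, B (V j (adj (V k) y)) = V j (adj (V k) (B y))) ->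
  forall k x, B (V k x) = V k (Phi B x).
Proof.
move=> hB hcomm k x.
have h1 := hconv_lin (bounded_comp hB (Vb k)) (HK2 x).
have h2 := hconv_lin (Vb k) (HK3 _ hB x).
apply: (hconv_uniq h1); apply: (hconv_ext _ h2) => n /=.
rewrite (lin_sum (bounded_lin (Vb k))) (lin_sum (bounded_lin (Vb k))) (lin_sum (bounded_lin hB)).
by apply: eq_bigr => j _; rewrite hcomm.
Qed.

Lemma main_iff (A : H -> H) :
  mult_domain Phi A <-> commutant (fun T : H -> H => exists j k : nat, T = V j \o adj (V k)) A.
Proof.
split.
  case=> hA [h1 h2].
  have hA' := adj_exists hc hA.
  move: hA' h1 h2; set A' := adj A => hA' h1 h2.
  have bA' := adjoint_bounded hA hA'.
  have hPA := Phi_adj _ _ hA bA' hA'.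
  have eadj : adj (Phi A) = Phi A' := adj_eq hPA.
  rewrite eadj in h1 h2.
  have e1 := L1 _ _ hA bA' hA' (fun x => congr1 (fun F => F x) h1).
  have e2 := L1 _ _ bA' hA (is_adjoint_sym hA') (fun x => congr1 (fun F => F x) h2).
  split => // T [j [k ->]]; apply: boolp.funext => y /=.
  rewrite e1; congr (V j _).
  apply: ip_ext => w.
  rewrite -(is_adjoint_sym hPA w) -(Vadj k (Phi A' w) y) -e2.
  by rewrite (is_adjoint_sym hA' (V k w) y) (Vadj k w (A y)).
case=> hA hcomm.
have hc' j k y : A (V j (adj (V k) y)) = V j (adj (V k) (A y)).
  have := hcomm _ (ex_intro _ j (ex_intro _ k erefl)).
  by move/(congr1 (fun F => F y)).
have hA' := adj_exists hc hA.
move: hA'; set A' := adj A => hA'.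
have bA' := adjoint_bounded hA hA'.
have hPA := Phi_adj _ _ hA bA' hA'.
have eadj : adj (Phi A) = Phi A' := adj_eq hPA.
have hc'' j k y : A' (V j (adj (V k) y)) = V j (adj (V k) (A' y)).
  apply: ip_ext => w.
  rewrite -(hA' w) -(Vadj' j (A w) (adj (V k) y)) -(Vadj k (adj (V j) (A w)) y).
  rewrite -hc' (hA' (V k (adj (V j) w)) y) (Vadj k (adj (V j) w) (A' y)).
  by rewrite (Vadj' j w (adj (V k) (A' y))).
have s1 := comm_step _ hA hc'.
have s2 := comm_step _ bA' hc''.
split => //; split; rewrite eadj; apply: boolp.funext => x /=.
  apply: (hconv_uniq (HK3 _ (bounded_comp bA' hA) x)).
  apply: (hconv_ext _ (HK3 _ bA' (Phi A x))) => n.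
  by apply: eq_bigr => k _ /=; rewrite s1.
apply: (hconv_uniq (HK3 _ (bounded_comp hA bA') x)).
apply: (hconv_ext _ (HK3 _ hA (Phi A' x))) => n.
by apply: eq_bigr => k _ /=; rewrite s2.
Qed.

End Basics.


Theorem mainTheorem2 (R : realType) (H : preHilbert R)
  (Hcomplete : hcomplete H) (Hsep : hseparable H)
  (V : nat -> H -> H) (Phi : (H -> H) -> (H -> H))
  (HK : kraus_rep V Phi) :
  forall A : H -> H,
    mult_domain Phi A <->
    commutant (fun T : H -> H => exists j k : nat, T = V j \o adj (V k)) A.
Proof.
move=> A; exact: (@main_iff R H Hcomplete V Phi HK A).
Qed.
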